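(* Let $n\ge1$, let $\mathcal{Q}\subseteq H^2(\mathbb{T}^n)$ be a quotient module and $\theta_{\mathcal{Q}}=P_{\mathcal{Q}}1$. If $\theta_{\mathcal{Q}}\in H^\infty(\mathbb{D}^n)$, then $S_{\theta_{\mathcal{Q}}}=P_{\mathcal{Q}}T_{\theta_{\mathcal{Q}}}|_{\mathcal{Q}}=I_{\mathcal{Q}}$.
   Context: $H^2(\mathbb{T}^n)$ is the Hardy space of the polydisc $\mathbb{D}^n$; $T_\varphi f=\varphi f$ for $\varphi\in H^\infty(\mathbb{D}^n)$, $T_{z_i}$ multiplication by $z_i$. A closed subspace $\mathcal{Q}$ is a quotient module if $T_{z_i}^*\mathcal{Q}\subseteq\mathcal{Q}$ for all $i$; $P_{\mathcal{Q}}$ is the orthogonal projection onto $\mathcal{Q}$. *)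

(* Defs.v *)
From mathcomp Require Import all_boot all_algebra all_classical all_reals all_analysis complex.
Import GRing.Theory Num.Theory numFieldNormedType.Exports.
Set Implicit Arguments. Unset Strict Implicit. Unset Printing Implicit Defensive.
Local Open Scope classical_set_scope.
Local Open Scope ring_scope.

(* Elements of H^2(T^n) are represented by their Taylor coefficient families
   f : {ffun 'I_n -> nat} -> R[i]  (f a = coefficient of z^a), subject to
   square summability (inH2). *)
Definition mi (n : nat) := {ffun 'I_n -> nat}.

Section Hardy.
Variables (R : realType) (n : nat).
Local Notation C := (R[i]).
Local Notation ser := (mi n -> C).

Definition sqmod (z : C) : R := complex.Re z ^+ 2 + complex.Im z ^+ 2.

Definition mi_of (N : nat) (a : {ffun 'I_n -> 'I_N}) : mi n :=
  [ffun i => nat_of_ord (a i)].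

Definition bsum (N : nat) (F : mi n -> C) : C :=
  \sum_(a : {ffun 'I_n -> 'I_N}) F (mi_of a).
Definition bsumR (N : nat) (F : mi n -> R) : R :=
  \sum_(a : {ffun 'I_n -> 'I_N}) F (mi_of a).

Definition cvgC (u : nat -> C) (l : C) : Prop :=
  ((fun k => complex.Re (u k)) @ \oo --> complex.Re l) /\
  ((fun k => complex.Im (u k)) @ \oo --> complex.Im l).

Definition inH2 (f : ser) : Prop :=
  exists M : R, forall N, bsumR N (fun a => sqmod (f a)) <= M.

Definition inner (f g : ser) (c : C) : Prop :=
  cvgC (fun N => bsum N (fun a => f a * conjc (g a))) c.

Definition cvgH2 (u : nat -> ser) (f : ser) : Prop :=
  forall e : R, 0 < e -> exists K : nat, forall k, (K <= k)%N ->
    forall N, bsumR N (fun a => sqmod (u k a - f a)) <= e.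

(* product of power series (Cauchy product) : coefficients of phi * f *)
Definition mbound (c : mi n) : nat := \max_(i < n) c i.
Definition smul (phi f : ser) : ser := fun c =>
  \sum_(a : {ffun 'I_n -> 'I_(mbound c).+1} | [forall i, (a i <= c i)%N])
     phi (mi_of a) * f [ffun i => (c i - a i)%N].

Definition hone : ser := fun a => if a == [ffun => 0%N] then 1 else 0.
Definition zcoord (i : 'I_n) : ser :=
  fun a => if a == [ffun j => nat_of_bool (j == i)] then 1 else 0.

Definition Tz (i : 'I_n) (h : ser) : ser := smul (zcoord i) h.

Definition closed_subspace (Q : set ser) : Prop :=
  [/\ forall f, Q f -> inH2 f,
      Q (fun _ => 0),
      forall f g, Q f -> Q g -> Q (fun a => f a + g a),
      forall (c : C) f, Q f -> Q (fun a => c * f a) &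
      forall (u : nat -> ser) f, (forall k, Q (u k)) -> inH2 f -> cvgH2 u f -> Q f].

(* Q is a quotient module: closed subspace with T_{z_i}^* Q \subseteq Q;
   "T_{z_i}^* f = g" means <T_{z_i} h, f> = <h, g> for all h in H^2. *)
Definition quotient_module (Q : set ser) : Prop :=
  closed_subspace Q /\
  forall (i : 'I_n) f, Q f -> exists g, Q g /\
    forall h, inH2 h -> exists c, inner (Tz i h) f c /\ inner h g c.

Definition is_proj (Q : set ser) (x y : ser) : Prop :=
  Q y /\ forall h, Q h -> inner (fun a => x a - y a) h 0.

Definition polydisc (z : 'I_n -> C) : Prop := forall i, sqmod (z i) < 1.

Definition heval (f : ser) (z : 'I_n -> C) (v : C) : Prop :=
  cvgC (fun N => bsum N (fun a => f a * \prod_(i < n) z i ^+ a i)) v.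

Definition inHinf (f : ser) : Prop :=
  exists M : R, forall z, polydisc z -> exists v, heval f z v /\ sqmod v <= M.

End Hardy.

(* Main.v *)
Require Import Defs.
From mathcomp Require Import all_boot all_algebra all_classical all_reals all_analysis complex.
From mathcomp Require Import separable cyclic cyclotomic.
From mathcomp Require Import ring lra order zify.
Import Order.TTheory GRing.Theory Num.Theory numFieldNormedType.Exports.
Set Implicit Arguments. Unset Strict Implicit. Unset Printing Implicit Defensive.
Local Open Scope classical_set_scope.
Local Open Scope ring_scope.
Local Open Scope complex_scope.
Import Normc.


Section Box.
Variable n : nat.
Implicit Types (a b c d : mi n).

Definition inbox N (d : mi n) := [forall i, (d i < N)%N].
Definition madd a b : mi n := [ffun i => (a i + b i)%N].
Definition mle a b := [forall i, (a i <= b i)%N].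
Definition msub c b : mi n := [ffun i => (c i - b i)%N].

Lemma inbox_mi_of N (a : {ffun 'I_n -> 'I_N}) : inbox N (mi_of a).
Proof. by apply/forallP => i; rewrite ffunE ltn_ord. Qed.

Lemma mi_of_inj N : injective (@mi_of n N).
Proof.
move=> a b /ffunP H; apply/ffunP => i; apply/val_inj; have := H i; by rewrite !ffunE.
Qed.

Lemma inboxP N d : inbox N d -> {a : {ffun 'I_n -> 'I_N} | mi_of a = d}.
Proof.
move=> H; exists [ffun i => Ordinal (forallP H i)].
by apply/ffunP => i; rewrite !ffunE.
Qed.

Lemma inbox_le N K d : (K <= N)%N -> inbox K d -> inbox N d.
Proof. move=> KN /forallP H; apply/forallP => i; exact: leq_trans (H i) KN. Qed.

Lemma inbox_mle N c d : mle d c -> inbox N c -> inbox N d.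
Proof. move=> /forallP H /forallP H2; apply/forallP => i; exact: leq_ltn_trans (H i) (H2 i). Qed.

Lemma mle_msub c b : mle (msub c b) c.
Proof. by apply/forallP => i; rewrite ffunE leq_subr. Qed.

Lemma sum_delta (V : nmodType) N d (G : mi n -> V) :
  \sum_(a : {ffun 'I_n -> 'I_N}) (if mi_of a == d then G (mi_of a) else 0)
  = if inbox N d then G d else 0.
Proof.
case: ifP => H.
- have [a0 Ha0] := inboxP H.
  rewrite (bigD1 a0) //= Ha0 eqxx big1 ?addr0 // => a Ha.
  case: eqP => // E; exfalso; move/eqP: Ha; apply; apply: mi_of_inj; by rewrite E Ha0.
- apply: big1 => a _; case: eqP => // E; by rewrite -E inbox_mi_of in H.
Qed.

Lemma sum_supp (V : nmodType) K L (F : mi n -> V) : (K <= L)%N ->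
  (forall d, ~~ inbox K d -> F d = 0) ->
  \sum_(a : {ffun 'I_n -> 'I_L}) F (mi_of a) = \sum_(a : {ffun 'I_n -> 'I_K}) F (mi_of a).
Proof.
move=> KL HF.
transitivity (\sum_(a : {ffun 'I_n -> 'I_L}) \sum_(b : {ffun 'I_n -> 'I_K})
   (if mi_of b == mi_of a then F (mi_of b) else 0)).
  apply: eq_bigr => a _; rewrite sum_delta; case: ifP => // H; by rewrite HF ?H.
rewrite exchange_big; apply: eq_bigr => b _.
under eq_bigr do rewrite eq_sym.
have := sum_delta L (mi_of b) (fun _ => F (mi_of b)); rewrite /= => ->.
by rewrite (inbox_le KL) // inbox_mi_of.
Qed.

Lemma sum_mono (R : realType) K L (F : mi n -> R) : (K <= L)%N -> (forall d, 0 <= F d) ->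
  \sum_(a : {ffun 'I_n -> 'I_K}) F (mi_of a) <= \sum_(a : {ffun 'I_n -> 'I_L}) F (mi_of a).
Proof.
move=> KL HF.
have -> : \sum_(a : {ffun 'I_n -> 'I_K}) F (mi_of a) =
  \sum_(a : {ffun 'I_n -> 'I_K}) (if inbox K (mi_of a) then F (mi_of a) else 0).
  by apply: eq_bigr => a _; rewrite inbox_mi_of.
rewrite -(@sum_supp _ K L (fun d => if inbox K d then F d else 0)) //; last first.
  by move=> d /negbTE ->.
apply: ler_sum => a _; case: ifP => _ //.
Qed.

Lemma madd_eq a b c : (madd a b == c) = mle b c && (a == msub c b).
Proof.
apply/idP/idP.
- move/eqP <-; apply/andP; split.
    by apply/forallP => i; rewrite ffunE leq_addl.
  by apply/eqP/ffunP => i; rewrite !ffunE addnK.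
- case/andP => /forallP H /eqP ->; apply/eqP/ffunP => i; rewrite !ffunE subnK //.
Qed.

Lemma maddC a b : madd a b = madd b a.
Proof. by apply/ffunP => i; rewrite !ffunE addnC. Qed.

Lemma cond_swap a b c : mle a c && (b == msub c a) = mle b c && (a == msub c b).
Proof. by rewrite -madd_eq maddC madd_eq. Qed.

Lemma inbox_mbound c : inbox (mbound c).+1 c.
Proof. apply/forallP => i; rewrite ltnS /mbound; exact: (leq_bigmax i). Qed.

End Box.

Section Smul.
Variables (R : realType) (n : nat).
Local Notation C := (R[i]).
Local Notation ser := (mi n -> C).

Definition sh (b : mi n) (s : ser) : ser := fun c => if mle b c then s (msub c b) else 0.

Lemma smul_sh (phi g : ser) c L : inbox L c ->
  smul phi g c = \sum_(b : {ffun 'I_n -> 'I_L}) g (mi_of b) * sh (mi_of b) phi c.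
Proof.
move=> Hc; rewrite /smul big_mkcond /=.
set M := (mbound c).+1.
transitivity (\sum_(a : {ffun 'I_n -> 'I_M}) \sum_(b : {ffun 'I_n -> 'I_L})
  (if mle (mi_of a) c && (mi_of b == msub c (mi_of a)) then phi (mi_of a) * g (mi_of b) else 0)).
  apply: eq_bigr => a _.
  have -> : [forall i, (a i <= c i)%N] = mle (mi_of a) c.
    by apply: eq_forallb => i; rewrite ffunE.
  have -> : [ffun i => (c i - a i)%N] = msub c (mi_of a).
    by apply/ffunP => i; rewrite !ffunE.
  case: ifP => H /=.
    have := @sum_delta _ _ L (msub c (mi_of a)) (fun d => phi (mi_of a) * g d).
    by rewrite /= (inbox_mle (mle_msub _ _) Hc) => ->.
  by rewrite big1.
rewrite exchange_big; apply: eq_bigr => b _.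
under eq_bigr do rewrite cond_swap.
rewrite /sh; case: ifP => H /=; last by rewrite big1 ?mulr0.
have := @sum_delta _ _ M (msub c (mi_of b)) (fun d => phi d * g (mi_of b)).
by rewrite /= (inbox_mle (mle_msub _ _) (inbox_mbound c)) mulrC => ->.
Qed.

End Smul.


Section Basic.
Variable R : realType.
Local Notation C := (R[i]).

Lemma cvgRP (u : nat -> R) l : u @ \oo --> l <->
  forall e, 0 < e -> exists K, forall k, (K <= k)%N -> `|u k - l| <= e.
Proof.
rewrite cvgrPdistC_le; split => H e e0.
- have [K _ HK] := H e e0; exists K => k Hk; exact: HK.
- have [K HK] := H e e0; exists K => // k Hk; exact: HK.
Qed.

Lemma cReD (x y : C) : complex.Re (x + y) = complex.Re x + complex.Re y.
Proof. by case: x; case: y. Qed.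
Lemma cImD (x y : C) : complex.Im (x + y) = complex.Im x + complex.Im y.
Proof. by case: x; case: y. Qed.
Lemma cReN (x : C) : complex.Re (- x) = - complex.Re x.
Proof. by case: x. Qed.
Lemma cImN (x : C) : complex.Im (- x) = - complex.Im x.
Proof. by case: x. Qed.
Lemma cReM (x y : C) : complex.Re (x * y) = complex.Re x * complex.Re y - complex.Im x * complex.Im y.
Proof. by case: x; case: y. Qed.
Lemma cImM (x y : C) : complex.Im (x * y) = complex.Re x * complex.Im y + complex.Im x * complex.Re y.
Proof. by case: x => a b; case: y => c d /=; rewrite addrC. Qed.

Lemma sqmod_ge0 (x : C) : 0 <= sqmod x.
Proof. by rewrite /sqmod addr_ge0 // sqr_ge0. Qed.

Lemma sqmodM (x y : C) : sqmod (x * y) = sqmod x * sqmod y.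
Proof. rewrite /sqmod cReM cImM; ring. Qed.

Lemma sqmodD (x y : C) : sqmod (x + y) <= 2 * sqmod x + 2 * sqmod y.
Proof.
rewrite /sqmod cReD cImD.
set a := complex.Re x; set b := complex.Im x; set c := complex.Re y; set d := complex.Im y.
have h1 := sqr_ge0 (a - c); have h2 := sqr_ge0 (b - d).
rewrite -subr_ge0; apply: le_trans (addr_ge0 h1 h2) _; rewrite le_eqVlt; apply/orP; left; apply/eqP; ring.
Qed.

Lemma sqmodN (x : C) : sqmod (- x) = sqmod x.
Proof. by rewrite /sqmod cReN cImN !sqrrN. Qed.

Lemma sqmod_conj (x : C) : (sqmod x)%:C = x * conjc x.
Proof. case: x => a b; rewrite /sqmod /=; apply/eqP; rewrite eq_complex /=; apply/andP; split; apply/eqP; ring. Qed.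

Lemma normc_ge0 (x : C) : 0 <= normc x.
Proof. by case: x => a b; rewrite /normc sqrtr_ge0. Qed.

Lemma normc_sq (x : C) : normc x ^+ 2 = sqmod x.
Proof. by case: x => a b; rewrite /normc /sqmod sqr_sqrtr // addr_ge0 // sqr_ge0. Qed.

Lemma normc_Re (x : C) : `|complex.Re x| <= normc x.
Proof.
have h1 := normc_ge0 x; have h2 := normc_sq x; move: h1 h2; rewrite /sqmod.
set s := normc x; set a := complex.Re x; set b := complex.Im x => h1 h2.
rewrite ler_norml; apply/andP; split; nra.
Qed.

Lemma normc_Im (x : C) : `|complex.Im x| <= normc x.
Proof.
have h1 := normc_ge0 x; have h2 := normc_sq x; move: h1 h2; rewrite /sqmod.
set s := normc x; set a := complex.Re x; set b := complex.Im x => h1 h2.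
rewrite ler_norml; apply/andP; split; nra.
Qed.

Lemma normc_ReIm (x : C) : normc x <= `|complex.Re x| + `|complex.Im x|.
Proof.
have h1 := normc_ge0 x; have h2 := normc_sq x; move: h1 h2; rewrite /sqmod.
set s := normc x; set a := complex.Re x; set b := complex.Im x => h1 h2.
have ha := normr_ge0 a; have hb := normr_ge0 b.
have e1 : a ^+ 2 = `|a| ^+ 2 by rewrite real_normK ?num_real.
have e2 : b ^+ 2 = `|b| ^+ 2 by rewrite real_normK ?num_real.
nra.
Qed.

Lemma normcD' (x y : C) : normc (x + y) <= normc x + normc y.
Proof. exact: le_normcD. Qed.

Lemma normc_sum (I : finType) (P : pred I) (F : I -> C) :
  normc (\sum_(i | P i) F i) <= \sum_(i | P i) normc (F i).
Proof.
elim/big_rec2: _ => [|i y x _ Hx]; first by rewrite normc0.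
apply: le_trans (normcD' _ _) _; by rewrite lerD2l.
Qed.

Lemma normcM' (x y : C) : normc (x * y) = normc x * normc y.
Proof. exact: normcM. Qed.

Lemma normcN' (x : C) : normc (- x) = normc x.
Proof. exact: normcN. Qed.

Lemma normc_conj (x : C) : normc (conjc x) = normc x.
Proof. by case: x => a b; rewrite /normc /= sqrrN. Qed.

End Basic.


Section CvgC.
Variable R : realType.
Local Notation C := (R[i]).

Lemma cvgC_unique (u : nat -> C) a b : cvgC u a -> cvgC u b -> a = b.
Proof.
case=> h1 h2 [h3 h4].
have e1 : complex.Re a = complex.Re b by apply: cvg_unique h1 h3.
have e2 : complex.Im a = complex.Im b by apply: cvg_unique h2 h4.
by case: a b e1 e2 {h1 h2 h3 h4} => a1 a2 [b1 b2] /= -> ->.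
Qed.

Lemma cvgC_ext (u v : nat -> C) a : (forall k, u k = v k) -> cvgC u a -> cvgC v a.
Proof.
move=> E; have -> : v = u by apply/funext => k; rewrite E.
done.
Qed.

Lemma cvgC_add (u v : nat -> C) a b : cvgC u a -> cvgC v b -> cvgC (fun k => u k + v k) (a + b).
Proof.
case=> h1 h2 [h3 h4]; split.
  rewrite cReD; under eq_cvg do rewrite cReD; exact: cvgD.
rewrite cImD; under eq_cvg do rewrite cImD; exact: cvgD.
Qed.

Lemma cvgC_scale (u : nat -> C) a c : cvgC u a -> cvgC (fun k => c * u k) (c * a).
Proof.
case=> h1 h2; split.
  rewrite cReM; under eq_cvg do rewrite cReM.
  apply: cvgB; [exact: cvgMl_tmp | exact: cvgMl_tmp].
rewrite cImM; under eq_cvg do rewrite cImM.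
apply: cvgD; [exact: cvgMl_tmp | exact: cvgMl_tmp].
Qed.

Lemma cvgC0P (u : nat -> C) : cvgC u 0 <->
  forall e, 0 < e -> exists K, forall k, (K <= k)%N -> normc (u k) <= e.
Proof.
split.
- case=> /cvgRP h1 /cvgRP h2 e e0.
  have e2 : 0 < e / 2 by rewrite divr_gt0.
  have [K1 HK1] := h1 _ e2; have [K2 HK2] := h2 _ e2.
  exists (maxn K1 K2) => k Hk.
  have := HK1 k (leq_trans (leq_maxl _ _) Hk); have := HK2 k (leq_trans (leq_maxr _ _) Hk).
  rewrite /= !subr0 => a1 a2; apply: le_trans (normc_ReIm _) _; lra.
- move=> H; split; apply/cvgRP => e e0; have [K HK] := H e e0; exists K => k Hk;
  rewrite /= subr0; apply: le_trans (HK k Hk).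
  exact: normc_Re. exact: normc_Im.
Qed.

End CvgC.

Section Inner.
Variables (R : realType) (n : nat).
Local Notation C := (R[i]).
Local Notation ser := (mi n -> C).

Lemma inner_add (f g h : ser) a b : inner f h a -> inner g h b ->
  inner (fun x => f x + g x) h (a + b).
Proof.
move=> H1 H2; have := cvgC_add H1 H2; apply: cvgC_ext => k.
by rewrite /bsum -big_split /=; apply: eq_bigr => x _; rewrite mulrDl.
Qed.

Lemma inner_scale (f h : ser) a c : inner f h a -> inner (fun x => c * f x) h (c * a).
Proof.
move=> H1; have := cvgC_scale c H1; apply: cvgC_ext => k.
by rewrite /bsum mulr_sumr; apply: eq_bigr => x _; rewrite mulrA.
Qed.

Lemma inner_ext (f g h : ser) a : (forall x, f x = g x) -> inner f h a -> inner g h a.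
Proof.
move=> E; apply: cvgC_ext => k; rewrite /bsum; apply: eq_bigr => x _; by rewrite E.
Qed.

Lemma inner_opp (f h : ser) a : inner f h a -> inner (fun x => - f x) h (- a).
Proof.
move=> H; have := inner_scale (-1) H; rewrite mulN1r; apply: inner_ext => x; by rewrite mulN1r.
Qed.

Lemma inner_sub (f g h : ser) a b : inner f h a -> inner g h b ->
  inner (fun x => f x - g x) h (a - b).
Proof. move=> H1 H2; exact: inner_add H1 (inner_opp H2). Qed.

End Inner.


Section Mono.
Variable R : realType.
Lemma mono_cauchy (u : nat -> R) : (forall m k, (m <= k)%N -> u m <= u k) ->
  (exists M, forall k, u k <= M) ->
  forall e, 0 < e -> exists p, forall k P, (p <= k)%N -> u P - u k <= e.
Proof.
move=> mon [M HM] e e0.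
have hs : has_sup (range u).
  split; first by exists (u 0%N), 0%N.
  by exists M => _ [k _ <-].
have [_ [p _ <-] Hp] := sup_adherent e0 hs.
exists p => k P pk.
have h1 : u P <= sup (range u) by apply: sup_upper_bound => //; exists P.
have h2 := mon _ _ pk.
lra.
Qed.

Lemma eqleR (x y : R) : x = y -> x <= y.
Proof. by move->. Qed.

Lemma amgm (a b d : R) : 0 < d -> a * b <= a ^+ 2 / (2 * d) + d * b ^+ 2 / 2.
Proof.
move=> d0.
have h := sqr_ge0 (a - d * b).
have -> : a * b = (2 * d * (a * b)) / (2 * d) by field; lra.
have -> : a ^+ 2 / (2 * d) + d * b ^+ 2 / 2 = (a ^+ 2 + d ^+ 2 * b ^+ 2) / (2 * d) by field; lra.
apply: ler_wpM2r; first by rewrite invr_ge0; lra.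
nra.
Qed.
End Mono.

Section H2.
Variables (R : realType) (n : nat).
Local Notation C := (R[i]).
Local Notation ser := (mi n -> C).

Lemma bsumR_ge0 N (F : mi n -> R) : (forall a, 0 <= F a) -> 0 <= bsumR N F.
Proof. move=> H; rewrite /bsumR; apply: sumr_ge0 => a _; exact: H. Qed.

Lemma inH2_ge0 (f : ser) M : (forall N, bsumR N (fun a => sqmod (f a)) <= M) -> 0 <= M.
Proof. move=> H; apply: le_trans (H 0%N); apply: bsumR_ge0 => a; exact: sqmod_ge0. Qed.

Lemma inH2_add (f g : ser) : inH2 f -> inH2 g -> inH2 (fun a => f a + g a).
Proof.
move=> [M1 H1] [M2 H2]; exists (2 * M1 + 2 * M2) => N.
apply: le_trans (_ : bsumR N (fun a => 2 * sqmod (f a) + 2 * sqmod (g a)) <= _).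
  rewrite /bsumR; apply: ler_sum => a _; exact: sqmodD.
rewrite /bsumR big_split /= -!mulr_sumr; apply: lerD; apply: ler_wpM2l => //; [exact: H1 | exact: H2].
Qed.

Lemma inH2_scale (f : ser) c : inH2 f -> inH2 (fun a => c * f a).
Proof.
move=> [M H]; exists (sqmod c * M) => N.
rewrite /bsumR; under eq_bigr do rewrite sqmodM; rewrite -mulr_sumr.
apply: ler_wpM2l; [exact: sqmod_ge0 | exact: H].
Qed.

Lemma inH2_ext (f g : ser) : (forall a, f a = g a) -> inH2 f -> inH2 g.
Proof. by move=> E; have -> : g = f by apply/funext => a; rewrite E. Qed.

Lemma inH2_opp (f : ser) : inH2 f -> inH2 (fun a => - f a).
Proof. move=> H; apply: inH2_ext (inH2_scale (-1) H) => a; by rewrite mulN1r. Qed.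

Lemma inH2_sub (f g : ser) : inH2 f -> inH2 g -> inH2 (fun a => f a - g a).
Proof. move=> H1 H2; exact: inH2_add H1 (inH2_opp H2). Qed.

Lemma coef_bound (f : ser) M : (forall N, bsumR N (fun a => sqmod (f a)) <= M) ->
  forall d, sqmod (f d) <= M.
Proof.
move=> H d; apply: le_trans (H (mbound d).+1).
have := sum_delta (mbound d).+1 d (fun a => sqmod (f a)).
rewrite inbox_mbound /= => <-.
rewrite /bsumR; apply: ler_sum => a _; case: ifP => _ //; exact: sqmod_ge0.
Qed.

Lemma inH2_hone : inH2 (@hone R n).
Proof.
exists 1 => N; rewrite /bsumR.
have E : forall a : mi n, sqmod (hone R a) = if a == [ffun => 0%N] then 1 else 0.
  by move=> a; rewrite /hone; case: ifP => _; rewrite /sqmod /=; ring.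
under eq_bigr do rewrite E.
have := sum_delta N [ffun => 0%N] (fun _ => (1 : R)); rewrite /= => ->.
by case: ifP.
Qed.

Lemma inH2_sh b (s : ser) N : bsumR N (fun a => sqmod (sh b s a)) <= bsumR N (fun a => sqmod (s a)).
Proof.
rewrite /bsumR /sh.
apply: le_trans (eqleR (_ : _ = \sum_(c : {ffun 'I_n -> 'I_N}) \sum_(d : {ffun 'I_n -> 'I_N})
   (if madd (mi_of d) b == mi_of c then sqmod (s (mi_of d)) else 0))) _.
  apply: eq_bigr => c _; under eq_bigr do rewrite madd_eq.
  case: ifP => H /=; last first.
    rewrite big1 // /sqmod /=; ring.
  have := sum_delta N (msub (mi_of c) b) (fun d => sqmod (s d)).
  by rewrite /= (inbox_mle (mle_msub _ _) (inbox_mi_of c)) => ->.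
rewrite exchange_big; apply: ler_sum => d _.
under eq_bigr do rewrite eq_sym.
have := sum_delta N (madd (mi_of d) b) (fun _ => sqmod (s (mi_of d))); rewrite /= => ->.
case: ifP => _ //; exact: sqmod_ge0.
Qed.

Lemma inH2_shP b (s : ser) : inH2 s -> inH2 (sh b s).
Proof. move=> [M H]; exists M => N; exact: le_trans (inH2_sh b s N) (H N). Qed.

Definition ee (i : 'I_n) : mi n := [ffun j => nat_of_bool (j == i)].

Lemma Tz_sh i (s : ser) : Tz i s = sh (ee i) s.
Proof.
apply/funext => c; rewrite /Tz (smul_sh _ _ (inbox_mbound c)).
transitivity (\sum_(b : {ffun 'I_n -> 'I_(mbound c).+1})
  (if mle (mi_of b) c && (ee i == msub c (mi_of b)) then s (mi_of b) else 0)).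
  apply: eq_bigr => b _; rewrite /sh /zcoord; case: (mle _ c) => /=; last by rewrite mulr0.
  have -> : (msub c (mi_of b) == [ffun j => nat_of_bool (j == i)]) = (ee i == msub c (mi_of b)).
    by rewrite eq_sym.
  by case: ifP => _; rewrite ?mulr1 ?mulr0.
under eq_bigr do rewrite cond_swap.
rewrite /sh; case: ifP => H /=; last by rewrite big1.
have := sum_delta (mbound c).+1 (msub c (ee i)) s.
by rewrite (inbox_mle (mle_msub _ _) (inbox_mbound c)) => <-.
Qed.

Lemma sh_add b d (s : ser) : sh (madd b d) s = sh d (sh b s).
Proof.
apply/funext => c; rewrite /sh.
have E : mle (madd b d) c = mle d c && mle b (msub c d).
  apply/forallP/andP => [H|[/forallP H1 /forallP H2] i].
  - split; apply/forallP => i; have := H i; rewrite !ffunE => Hi; lia.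
  - have := H1 i; have := H2 i; rewrite !ffunE; lia.
rewrite E; case: (mle d c) => //=; case: (mle b _) => //.
congr s; apply/ffunP => i; rewrite !ffunE; lia.
Qed.

Lemma sh0 (s : ser) : sh [ffun => 0%N] s = s.
Proof.
apply/funext => c; rewrite /sh.
have -> : mle [ffun => 0%N] c by apply/forallP => i; rewrite ffunE.
congr s; apply/ffunP => i; rewrite !ffunE subn0 //.
Qed.

Definition Sperp (Q : set ser) (s : ser) := inH2 s /\ forall q, Q q -> inner s q 0.

Lemma Sperp_Tz Q s i : quotient_module Q -> Sperp Q s -> Sperp Q (Tz i s).
Proof.
move=> [_ HQ] [Hs Hp]; split; first by rewrite Tz_sh; exact: inH2_shP.
move=> q Qq; have [g [Qg Hg]] := HQ i q Qq.
have [c [H1 H2]] := Hg s Hs.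
have := Hp g Qg => H3; have := cvgC_unique H2 H3 => E; by rewrite -E.
Qed.

Lemma Sperp_sh Q s b : quotient_module Q -> Sperp Q s -> Sperp Q (sh b s).
Proof.
move=> HQ Hs; move: {2}(\sum_i b i)%N (erefl (\sum_i b i)%N) => k.
elim: k b => [|k IH] b Hb.
  have -> : b = [ffun => 0%N].
    apply/ffunP => i; rewrite ffunE; apply/eqP; rewrite -leqn0.
    by rewrite -Hb (bigD1 i) //= leq_addr.
  by rewrite sh0.
have [i Hi] : exists i, (0 < b i)%N.
  apply/existsP; apply: contraT; rewrite negb_exists => /forallP H.
  suff : (\sum_i b i)%N = 0%N by rewrite Hb.
  by apply: big1 => i _; have := H i; rewrite lt0n negbK => /eqP.
have -> : b = madd (msub b (ee i)) (ee i).
  apply/ffunP => j; rewrite !ffunE; case: eqP => [->|_] /=; lia.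
rewrite sh_add -Tz_sh; apply: Sperp_Tz => //; apply: IH.
rewrite (bigD1 i) //= in Hb; rewrite (bigD1 i) //= !ffunE eqxx /=.
rewrite (eq_bigr (fun j => b j)); last first.
  by move=> j Hj; rewrite !ffunE (negbTE Hj) subn0.
move: Hb Hi; set S := (\sum_(j | j != i) b j)%N; lia.
Qed.

Lemma Sperp_add Q s t : Sperp Q s -> Sperp Q t -> Sperp Q (fun a => s a + t a).
Proof.
move=> [H1 H2] [H3 H4]; split; first exact: inH2_add.
move=> q Qq; rewrite -(addr0 0); exact: inner_add (H2 q Qq) (H4 q Qq).
Qed.

Lemma Sperp_scale Q s c : Sperp Q s -> Sperp Q (fun a => c * s a).
Proof.
move=> [H1 H2]; split; first exact: inH2_scale.
move=> q Qq; rewrite -(mulr0 c); exact: inner_scale (H2 q Qq).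
Qed.

Lemma Sperp_ext Q s t : (forall a, s a = t a) -> Sperp Q s -> Sperp Q t.
Proof. by move=> E; have -> : t = s by apply/funext => a; rewrite E. Qed.

Lemma Sperp_sum Q (I : finType) (F : I -> ser) : (forall i, Sperp Q (F i)) ->
  Sperp Q (fun a => \sum_i F i a).
Proof.
move=> H; rewrite unlock /=; elim: (index_enum I) => [|x r IH] /=.
  split; first by exists 0 => N; rewrite /bsumR big1 // => a _; rewrite /sqmod /=; ring.
  move=> q _; apply: cvgC_ext (_ : cvgC (fun _ => 0) 0) => [k|].
    by rewrite /bsum big1 // => a _; rewrite mul0r.
  by split; apply: cvg_cst.
exact: Sperp_add.
Qed.

Definition trunc K (f : ser) : ser := fun a => if inbox K a then f a else 0.

Lemma bsumR_mono (f : ser) N P : (N <= P)%N ->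
  bsumR N (fun a => sqmod (f a)) <= bsumR P (fun a => sqmod (f a)).
Proof. move=> NP; apply: sum_mono => // d; exact: sqmod_ge0. Qed.

Lemma trunc_cvg (f : ser) : inH2 f -> cvgH2 (fun K => trunc K f) f.
Proof.
move=> [M HM] e e0.
have [p Hp] := @mono_cauchy R (fun N => bsumR N (fun a => sqmod (f a)))
  (fun m k mk => bsumR_mono f mk) (ex_intro _ M HM) e e0.
exists p => k pk N.
set P := maxn N k.
apply: le_trans (_ : bsumR P (fun a => sqmod (trunc k f a - f a)) <= _).
  apply: sum_mono; [exact: leq_maxl | move=> d; exact: sqmod_ge0].
apply: le_trans (Hp k P pk).
have E : forall a, sqmod (trunc k f a - f a) = sqmod (f a) - (if inbox k a then sqmod (f a) else 0).
  move=> a; rewrite /trunc; case: ifP => _; rewrite ?subrr ?sub0r ?subr0 ?sqmodN //.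
  rewrite /sqmod /=; ring.
rewrite /bsumR; under eq_bigr do rewrite E; rewrite sumrB.
rewrite (@sum_supp _ _ k P (fun a => if inbox k a then sqmod (f a) else 0)) ?leq_maxr //; last first.
  by move=> d /negbTE ->.
by under [X in _ - X <= _]eq_bigr do rewrite inbox_mi_of.
Qed.

Lemma inner_lim (g : ser) (gk : nat -> ser) h : inH2 h -> cvgH2 gk g ->
  (forall k, inner (gk k) h 0) -> inner g h 0.
Proof.
move=> [H hH] Hc Hk; have H0 := inH2_ge0 hH.
apply/cvgC0P => eps eps0.
set d := eps / (2 * (H + 1)).
have d0 : 0 < d by rewrite divr_gt0 //; lra.
have dH : d * H <= eps / 2.
  rewrite /d; have -> : eps / (2 * (H + 1)) * H = (eps / 2) * (H / (H + 1)) by field; lra.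
  apply: ler_piMr; [lra | rewrite ler_pdivrMr; lra].
have e0 : 0 < d * eps / 2 by apply: divr_gt0; [exact: mulr_gt0|lra].
have [K HK] := Hc _ e0.
have HN0 := proj1 (cvgC0P _) (Hk K); have e2 : 0 < eps / 2 by lra.
have [N1 HN1] := HN0 _ e2.
exists N1 => N HN.
set x := fun a => gk K a - g a.
have E : bsum N (fun a => g a * conjc (h a)) =
  bsum N (fun a => gk K a * conjc (h a)) - bsum N (fun a => x a * conjc (h a)).
  rewrite /bsum -sumrB; apply: eq_bigr => a _; rewrite /x; ring.
rewrite E; apply: le_trans (normcD' _ _) _; rewrite normcN'.
have h1 := HN1 N HN.
suff : normc (bsum N (fun a => x a * conjc (h a))) <= eps / 2 by lra.
apply: le_trans (normc_sum _ _) _.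
apply: le_trans (_ : \sum_(a : {ffun 'I_n -> 'I_N}) (sqmod (x (mi_of a)) / (2 * d) + d * sqmod (h (mi_of a)) / 2) <= _).
  apply: ler_sum => a _; rewrite normcM' normc_conj -!normc_sq; apply: amgm d0.
rewrite big_split /= -!mulr_suml -mulr_sumr.
have hx := HK K (leqnn K) N; have hh := hH N.
rewrite /bsumR in hx hh.
set X := \sum_(i : {ffun 'I_n -> 'I_N}) sqmod (x (mi_of i)) in hx *.
set Y := \sum_(i : {ffun 'I_n -> 'I_N}) sqmod (h (mi_of i)) in hh *.
have -> : X / (2 * d) + d * Y / 2 = X / (2 * d) + (d * Y) / 2 by rewrite mulrA.
have : X / (2 * d) <= eps / 4.
  rewrite ler_pdivrMr; last lra.
  have -> : eps / 4 * (2 * d) = d * eps / 2 by field.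
  done.
have : d * Y <= d * H by rewrite ler_pM2l.
lra.
Qed.

End H2.


Section Roots.
Variable R : realType.
Local Notation C := (R[i]).

Lemma prim_ex N : (N > 0)%N -> exists z : C, N.-primitive_root z.
Proof.
pose p : {poly C} := 'X^N - 1; have [r Dp] := closed_field_poly_normal p.
move=> n_gt0; rewrite (monicP _) ?monicXnsubC // scale1r in Dp.
have rn1: all N.-unity_root r by apply/allP=> z; rewrite -root_prod_XsubC -Dp.
have sz_r: (N < (size r).+1)%N.
  by rewrite -(size_prod_XsubC r id) -Dp size_XnsubC.
have [|z] := hasP (has_prim_root n_gt0 rn1 _ sz_r); last by exists z.
by rewrite -separable_prod_XsubC -Dp separable_Xn_sub_1 // pnatr_eq0 -lt0n.
Qed.

Lemma sqmod1 : sqmod (1 : C) = 1.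
Proof. by rewrite /sqmod /= expr1n expr0n addr0. Qed.

Lemma sqmodX (x : C) k : sqmod (x ^+ k) = sqmod x ^+ k.
Proof. elim: k => [|k IH]; first by rewrite !expr0 sqmod1. by rewrite !exprS sqmodM IH. Qed.

Lemma root_conj N (w : C) : (0 < N)%N -> N.-primitive_root w -> conjc w = w ^+ N.-1.
Proof.
move=> N0 pw.
have wN := prim_expr_order pw.
have s1 : sqmod w = 1.
  apply/eqP; rewrite -(pexpr_eq1 N0 (sqmod_ge0 w)) -sqmodX wN; apply/eqP; exact: sqmod1.
have h1 : w * conjc w = 1 by rewrite -sqmod_conj s1.
have h2 : w * w ^+ N.-1 = 1 by rewrite -exprS prednK.
have w0 : w != 0 by apply/eqP => w0; move: h1; rewrite w0 mul0r => /eqP; rewrite eq_sym oner_eq0.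
by apply: (mulfI w0); rewrite h1 h2.
Qed.

Lemma conjX (x : C) k : conjc (x ^+ k) = conjc x ^+ k.
Proof. exact: rmorphXn. Qed.

Lemma geom_root N (u : C) : u ^+ N = 1 -> \sum_(x < N) u ^+ x = if u == 1 then N%:R else 0.
Proof.
move=> uN; case: eqP => [->|/eqP u1].
  by rewrite (eq_bigr (fun _ => 1)) ?sumr_const ?card_ord // => x _; rewrite expr1n.
have := subrX1 u N; rewrite uN subrr => /esym/eqP; rewrite mulf_eq0 subr_eq0 (negbTE u1) /=.
by move/eqP.
Qed.

Lemma dvd_mod N c d : (0 < N)%N -> (N %| c + N.-1 * d)%N = (c %% N == d %% N)%N.
Proof.
move=> N0; rewrite /dvdn -(mod0n N).
rewrite -(eqn_modDr d) add0n -addnA -{2}(mul1n d) -mulnDl addn1 prednK //.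
by rewrite addnC mulnC modnMDl.
Qed.
End Roots.

Section Pars.
Variables (R : realType) (n : nat).
Local Notation C := (R[i]).
Local Notation ser := (mi n -> C).

Definition Wj N (w : C) (j : {ffun 'I_n -> 'I_N}) (c : mi n) : C := \prod_i w ^+ (j i * c i).
Definition mmod N (c : mi n) : mi n := [ffun i => (c i %% N)%N].

Lemma Wj_orth N w c d : (0 < N)%N -> N.-primitive_root w ->
  \sum_(j : {ffun 'I_n -> 'I_N}) Wj w j c * conjc (Wj w j d)
  = if mmod N c == mmod N d then (N ^ n)%:R else 0.
Proof.
move=> N0 pw.
have E : forall j : {ffun 'I_n -> 'I_N}, Wj w j c * conjc (Wj w j d)
    = \prod_i (w ^+ (c i + N.-1 * d i)) ^+ (j i).
  move=> j; rewrite /Wj rmorph_prod -big_split /=; apply: eq_bigr => i _.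
  rewrite conjX (root_conj N0 pw) -!exprM -exprD; congr (_ ^+ _).
  rewrite mulnDl; congr (_ + _)%N; [by rewrite mulnC | by rewrite mulnCA mulnC].
under eq_bigr do rewrite E.
rewrite -(bigA_distr_bigA (fun i (x : 'I_N) => (w ^+ (c i + N.-1 * d i)) ^+ x)) /=.
have U : forall i, (w ^+ (c i + N.-1 * d i)) ^+ N = 1.
  by move=> i; rewrite exprAC (prim_expr_order pw) expr1n.
under eq_bigr => i _ do rewrite geom_root ?U // -(prim_order_dvd pw) dvd_mod //.
case: eqP => [/ffunP H|H].
  rewrite (eq_bigr (fun _ => N%:R)) ?prodr_const ?card_ord ?natrX // => i _.
  by have := H i; rewrite !ffunE => ->; rewrite eqxx.
have [i Hi] : exists i, (c i %% N != d i %% N)%N.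
  apply/existsP; apply: contraT; rewrite negb_exists => /forallP H2.
  exfalso; apply: H; apply/ffunP => i; rewrite !ffunE; apply/eqP; have := H2 i; by rewrite negbK.
by rewrite (bigD1 i) //= (negbTE Hi) mul0r.
Qed.

Definition Sj N W (w : C) (j : {ffun 'I_n -> 'I_N}) (G : ser) : C :=
  \sum_(c : {ffun 'I_n -> 'I_W}) G (mi_of c) * Wj w j (mi_of c).
Definition Am N W (m : mi n) (G : ser) : C :=
  \sum_(c : {ffun 'I_n -> 'I_W}) (if mmod N (mi_of c) == m then G (mi_of c) else 0).

Lemma pars N W w (G : ser) : (0 < N)%N -> N.-primitive_root w ->
  \sum_(j : {ffun 'I_n -> 'I_N}) Sj W w j G * conjc (Sj W w j G)
  = (N ^ n)%:R * \sum_(m : {ffun 'I_n -> 'I_N}) Am N W (mi_of m) G * conjc (Am N W (mi_of m) G).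
Proof.
move=> N0 pw.
transitivity (\sum_(c : {ffun 'I_n -> 'I_W}) \sum_(d : {ffun 'I_n -> 'I_W})
   G (mi_of c) * conjc (G (mi_of d)) * (if mmod N (mi_of c) == mmod N (mi_of d) then (N ^ n)%:R else 0)).
  rewrite /Sj.
  under eq_bigr do rewrite rmorph_sum mulr_suml; under eq_bigr do under eq_bigr do rewrite mulr_sumr.
  rewrite exchange_big; apply: eq_bigr => c _; rewrite exchange_big; apply: eq_bigr => d _.
  rewrite -(Wj_orth (mi_of c) (mi_of d) N0 pw) mulr_sumr; apply: eq_bigr => j _.
  by rewrite rmorphM; ring.
symmetry; rewrite /Am big_distrr /=.
transitivity (\sum_(m : {ffun 'I_n -> 'I_N}) \sum_(c : {ffun 'I_n -> 'I_W}) \sum_(d : {ffun 'I_n -> 'I_W})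
  (N ^ n)%:R * ((if mmod N (mi_of c) == mi_of m then G (mi_of c) else 0) *
      conjc (if mmod N (mi_of d) == mi_of m then G (mi_of d) else 0))).
  apply: eq_bigr => m _; rewrite rmorph_sum big_distrl /= big_distrr /=.
  apply: eq_bigr => c _; rewrite big_distrr /= big_distrr /=.
  by apply: eq_bigr => d _.
rewrite exchange_big; apply: eq_bigr => c _; rewrite exchange_big; apply: eq_bigr => d _.
transitivity (\sum_(m : {ffun 'I_n -> 'I_N}) (if mi_of m == mmod N (mi_of c) then
   (N ^ n)%:R * (G (mi_of c) * conjc (G (mi_of d))) * (if mmod N (mi_of d) == mi_of m then 1 else 0) else 0)).
  apply: eq_bigr => m _; rewrite [mi_of m == _]eq_sym.
  by case: ifP => _; case: ifP => _; rewrite ?rmorph0; ring.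
have := sum_delta N (mmod N (mi_of c)) (fun x => (N ^ n)%:R * (G (mi_of c) * conjc (G (mi_of d))) * (if mmod N (mi_of d) == x then 1 else 0)).
have -> : inbox N (mmod N (mi_of c)) by apply/forallP => i; rewrite ffunE ltn_pmod.
move=> /= ->; rewrite [mmod N (mi_of d) == _]eq_sym.
by case: ifP => _; ring.
Qed.

End Pars.


Section Expand.
Variables (R : realType) (n : nat).
Local Notation C := (R[i]).
Local Notation ser := (mi n -> C).

Definition rho (r : R) (a : mi n) : R := \prod_i r ^+ a i.

Lemma rho_add r a b : rho r (madd a b) = rho r a * rho r b.
Proof. by rewrite /rho -big_split /=; apply: eq_bigr => i _; rewrite ffunE exprD. Qed.

Lemma Wj_add N (w : C) (j : {ffun 'I_n -> 'I_N}) a b : Wj w j (madd a b) = Wj w j a * Wj w j b.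
Proof. by rewrite /Wj -big_split /=; apply: eq_bigr => i _; rewrite ffunE mulnDr exprD. Qed.

Lemma expand_pt L N (w : C) (j : {ffun 'I_n -> 'I_N}) r (F : ser) :
  bsum L (fun a => F a * \prod_i ((r%:C) * w ^+ (j i)) ^+ a i)
  = Sj L w j (fun a => F a * (rho r a)%:C).
Proof.
rewrite /bsum /Sj; apply: eq_bigr => a _; rewrite -mulrA; congr (_ * _).
rewrite /rho /Wj rmorph_prod -big_split /=; apply: eq_bigr => i _.
by rewrite exprMn rmorphXn exprM.
Qed.

Definition mconv L T (F1 F2 : ser) (c : mi n) : C :=
  \sum_(a : {ffun 'I_n -> 'I_L}) \sum_(b : {ffun 'I_n -> 'I_T})
    (if madd (mi_of a) (mi_of b) == c then F1 (mi_of a) * F2 (mi_of b) else 0).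

Lemma inbox_madd L T (a : {ffun 'I_n -> 'I_L}) (b : {ffun 'I_n -> 'I_T}) :
  inbox (L + T) (madd (mi_of a) (mi_of b)).
Proof.
apply/forallP => i; rewrite !ffunE.
have h1 := ltn_ord (a i); have h2 := ltn_ord (b i); lia.
Qed.

Lemma Sj_mul L T N (w : C) (j : {ffun 'I_n -> 'I_N}) (F1 F2 : ser) :
  Sj L w j F1 * Sj T w j F2 = Sj (L + T) w j (mconv L T F1 F2).
Proof.
rewrite /Sj /mconv big_distrl /=.
transitivity (\sum_(a : {ffun 'I_n -> 'I_L}) \sum_(b : {ffun 'I_n -> 'I_T})
   \sum_(c : {ffun 'I_n -> 'I_(L + T)}) (if mi_of c == madd (mi_of a) (mi_of b) then
      F1 (mi_of a) * F2 (mi_of b) * Wj w j (mi_of c) else 0)).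
  apply: eq_bigr => a _; rewrite big_distrr /=; apply: eq_bigr => b _.
  have := sum_delta (L + T) (madd (mi_of a) (mi_of b)) (fun c => F1 (mi_of a) * F2 (mi_of b) * Wj w j c).
  rewrite inbox_madd /= => ->; rewrite Wj_add; ring.
symmetry; under eq_bigr do rewrite big_distrl /=.
rewrite exchange_big; apply: eq_bigr => a _; under eq_bigr do rewrite big_distrl /=.
rewrite exchange_big; apply: eq_bigr => b _; apply: eq_bigr => c _.
by rewrite eq_sym; case: ifP => _; rewrite ?mul0r.
Qed.

Lemma mconv_rho L T r (F1 F2 : ser) c :
  mconv L T (fun a => F1 a * (rho r a)%:C) (fun a => F2 a * (rho r a)%:C) c
  = mconv L T F1 F2 c * (rho r c)%:C.
Proof.
rewrite /mconv big_distrl /=; apply: eq_bigr => a _; rewrite big_distrl /=; apply: eq_bigr => b _.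
case: eqP => [<-|_]; last by rewrite mul0r.
by rewrite rho_add rmorphM /=; ring.
Qed.

Lemma mconv_sh L T (F1 F2 : ser) c : inbox L c ->
  mconv L T F1 F2 c = \sum_(b : {ffun 'I_n -> 'I_T}) F2 (mi_of b) * sh (mi_of b) F1 c.
Proof.
move=> Hc; rewrite /mconv exchange_big; apply: eq_bigr => b _.
under eq_bigr do rewrite madd_eq.
rewrite /sh; case: ifP => H /=; last by rewrite big1 ?mulr0.
have := sum_delta L (msub c (mi_of b)) (fun a => F1 a * F2 (mi_of b)).
by rewrite (inbox_mle (mle_msub _ _) Hc) /= => ->; rewrite mulrC.
Qed.

Lemma mconv_smul L T (F1 F2 : ser) c : (T <= L)%N -> inbox T c ->
  mconv L T F1 F2 c = smul F1 F2 c.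
Proof.
move=> TL Hc; rewrite mconv_sh ?(inbox_le TL) //; by rewrite (smul_sh _ _ Hc).
Qed.

Lemma mconv_bound L T (F1 F2 : ser) c beta : (forall a, normc (F1 a) <= beta) ->
  normc (mconv L T F1 F2 c) <= beta * \sum_(b : {ffun 'I_n -> 'I_T}) normc (F2 (mi_of b)).
Proof.
move=> Hb; have b0 : 0 <= beta by apply: le_trans (Hb c); exact: normc_ge0.
rewrite /mconv exchange_big; apply: le_trans (normc_sum _ _) _.
rewrite big_distrr /=; apply: ler_sum => b _.
under eq_bigr do rewrite madd_eq.
case: (boolP (mle (mi_of b) c)) => H /=; last first.
  rewrite big1 ?normc0 ?mulr_ge0 ?normc_ge0 //.
have := sum_delta L (msub c (mi_of b)) (fun a => F1 a * F2 (mi_of b)); rewrite /= => ->.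
case: ifP => _; last by rewrite normc0 mulr_ge0 ?normc_ge0.
rewrite normcM'; apply: ler_wpM2r; [exact: normc_ge0 | exact: Hb].
Qed.

End Expand.


Section Real.
Variable R : realType.

Lemma geom_bound (t : R) W : 0 <= t < 1 -> \sum_(x < W) t ^+ x <= (1 - t)^-1.
Proof.
case/andP => t0 t1.
have E := subrX1 t W.
have S0 : 0 <= \sum_(x < W) t ^+ x by apply: sumr_ge0 => x _; exact: exprn_ge0.
have tW : 0 <= t ^+ W by exact: exprn_ge0.
have -> : \sum_(x < W) t ^+ x = (1 - t ^+ W) / (1 - t).
  apply: (@mulIf _ (1 - t)); first by rewrite subr_eq0; apply/eqP => h; rewrite h ltxx in t1.
  rewrite divfK; last by rewrite subr_eq0; apply/eqP => h; rewrite h ltxx in t1.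
  have -> : 1 - t ^+ W = - (t ^+ W - 1) by ring.
  by rewrite E; ring.
rewrite -[X in _ <= X]mul1r; apply: ler_wpM2r; first by rewrite invr_ge0; lra.
lra.
Qed.

Lemma bernoulli_ineq (d : R) k : 0 <= d <= 1 -> 1 - k%:R * d <= (1 - d) ^+ k.
Proof.
case/andP => d0 d1; elim: k => [|k IH]; first by rewrite expr0 mul0r subr0.
rewrite exprS -addn1 natrD.
have h : 0 <= 1 - d by lra.
have h2 : (1 - k%:R * d) * (1 - d) <= (1 - d) * (1 - d) ^+ k.
  by rewrite mulrC; apply: ler_wpM2l.
have h3 : 0 <= k%:R * d * d by rewrite mulr_ge0 // mulr_ge0.
nra.
Qed.

Lemma lim_t (a b : R) k : 0 <= a -> (forall t, 0 < t < 1 -> t ^+ k * a <= b) -> a <= b.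
Proof.
move=> a0 H.
have b0 : 0 <= b.
  apply: le_trans (H 2^-1 _); first by rewrite mulr_ge0 // exprn_ge0 // invr_ge0.
  by apply/andP; split; [rewrite invr_gt0; lra | rewrite invf_lt1; lra].
rewrite leNgt; apply/negP => ba.
set K : R := k%:R.
have K0 : 0 <= K by exact: ler0n.
have KX : 0 <= K * a by exact: mulr_ge0.
set den := K * a + a + 1.
have den0 : 0 < den by rewrite /den; lra.
set d := (a - b) / den.
have d0 : 0 < d by rewrite divr_gt0 //; lra.
have d1 : d < 1 by rewrite ltr_pdivrMr //; rewrite /den; lra.
have Hb : 1 - K * d <= (1 - d) ^+ k by apply: bernoulli_ineq; lra.
have e : K * d * a = (a - b) * (K * a / den) by rewrite /d; field; lra.
have f : K * a / den < 1 by rewrite ltr_pdivrMr //; rewrite /den; lra.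
have g : K * d * a < a - b.
  rewrite e -[ltRHS]mulr1 ltr_pM2l //; lra.
have h1 : (1 - K * d) * a <= (1 - d) ^+ k * a by apply: ler_wpM2r.
have h2 := H (1 - d) (_ : _); rewrite (_ : (0 < 1 - d < 1) = true) in h2; last first.
  by apply/andP; split; lra.
have h3 := h2 isT.
have : (1 - K * d) * a = a - K * d * a by ring.
lra.
Qed.

Lemma lim_N (X Y A t : R) N1 : 0 <= A -> 0 <= t < 1 ->
  (forall N, (N1 <= N)%N -> X <= Y + A * t ^+ N) -> X <= Y.
Proof.
move=> A0 /andP [t0 t1] H; rewrite leNgt; apply/negP => YX.
have tl : `|t| < 1 by rewrite ger0_norm.
have /cvgRP Hc := cvg_expr tl.
have e0 : 0 < (X - Y) / (A + 1) by rewrite divr_gt0; lra.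
have [K HK] := Hc _ e0.
set N := maxn K N1.
have h1 := HK N (leq_maxl _ _); rewrite subr0 ger0_norm ?exprn_ge0 // in h1.
have h2 := H N (leq_maxr _ _).
have : A * t ^+ N <= A * ((X - Y) / (A + 1)) by apply: ler_wpM2l.
have : A * ((X - Y) / (A + 1)) < X - Y.
  rewrite mulrA ltr_pdivrMr; [nra | lra].
lra.
Qed.

Lemma lim_ge (u : nat -> R) l a K0 : u @ \oo --> l -> (forall k, (K0 <= k)%N -> a <= u k) -> a <= l.
Proof.
move=> /cvgRP Hc H; rewrite leNgt; apply/negP => la.
have e0 : 0 < (a - l) / 2 by rewrite divr_gt0; lra.
have [K HK] := Hc _ e0.
have h1 := HK (maxn K K0) (leq_maxl _ _); have h2 := H (maxn K K0) (leq_maxr _ _).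
move: h1; rewrite ler_norml; lra.
Qed.

Lemma cvg_sumI (I : finType) (u : I -> nat -> R) (l : I -> R) :
  (forall i, u i @ \oo --> l i) -> (fun k => \sum_i u i k) @ \oo --> \sum_i l i.
Proof.
move=> H; rewrite unlock /=; elim: (index_enum I) => [|x r IH] /=.
  exact: cvg_cst.
exact: cvgD.
Qed.

Lemma cvg_sqmod (u : nat -> R[i]) v : cvgC u v -> (fun k => sqmod (u k)) @ \oo --> sqmod v.
Proof.
case=> h1 h2; rewrite /sqmod; apply: cvgD; under eq_cvg do rewrite expr2; rewrite expr2; exact: cvgM.
Qed.

End Real.


Section Tail.
Variables (R : realType) (n : nat).

Lemma rho_ge0 (r : R) (c : mi n) : 0 <= r -> 0 <= rho r c.
Proof. by move=> r0; apply: prodr_ge0 => i _; exact: exprn_ge0. Qed.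

Lemma tail (t : R) W N : 0 <= t < 1 ->
  \sum_(c : {ffun 'I_n -> 'I_W}) (if inbox N (mi_of c) then 0 else rho (t ^+ 2) (mi_of c))
  <= n%:R * (t ^+ N / (1 - t) ^+ n).
Proof.
case/andP => t0 t1.
have t2 : 0 <= t ^+ 2 by exact: exprn_ge0.
apply: le_trans (_ : _ <= \sum_(c : {ffun 'I_n -> 'I_W}) \sum_(i < n)
   (if (N <= mi_of c i)%N then rho (t ^+ 2) (mi_of c) else 0)) _.
  apply: ler_sum => c _; case: ifP => Hin.
    by apply: sumr_ge0 => i _; case: ifP => _ //; exact: rho_ge0.
  have [i Hi] : exists i, (N <= mi_of c i)%N.
    move/negbT: Hin; rewrite /inbox negb_forall => /existsP [i Hi]; exists i; by rewrite leqNgt.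
  rewrite (bigD1 i) //= Hi lerDl; apply: sumr_ge0 => k _; case: ifP => _ //; exact: rho_ge0.
rewrite exchange_big /=.
apply: le_trans (_ : _ <= \sum_(i < n) (t ^+ N / (1 - t) ^+ n)) _; last first.
  by rewrite sumr_const card_ord mulr_natl.
apply: ler_sum => i _.
set f := fun (k : 'I_n) (x : 'I_W) => if (k == i) && (x < N)%N then 0 else (t ^+ 2) ^+ x.
have E : \sum_(c : {ffun 'I_n -> 'I_W}) (if (N <= mi_of c i)%N then rho (t ^+ 2) (mi_of c) else 0)
   = \prod_k \sum_(x : 'I_W) f k x.
  rewrite (bigA_distr_bigA f) /=; apply: eq_bigr => c _.
  rewrite /rho (bigD1 i) //= [in RHS](bigD1 i) //= /f eqxx /= ffunE leqNgt.
  case: (c i < N)%N => /=; first by rewrite mul0r.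
  congr (_ * _); apply: eq_bigr => k Hk; by rewrite (negbTE Hk) /= ffunE.
rewrite E.
apply: le_trans (_ : _ <= \prod_k ((if k == i then t ^+ N else 1) * (1 - t)^-1)) _.
  apply: ler_prod => k _; apply/andP; split.
    apply: sumr_ge0 => x _; rewrite /f; case: ifP => _ //; exact: exprn_ge0.
  apply: le_trans (_ : _ <= \sum_(x < W) (if k == i then t ^+ N else 1) * t ^+ x) _; last first.
    rewrite -mulr_sumr; apply: ler_wpM2l; first by case: ifP => _ //; exact: exprn_ge0.
    apply: geom_bound; lra.
  apply: ler_sum => x _; rewrite /f -exprM mulnC exprM expr2.
  have tx1 : t ^+ x <= 1 by apply: exprn_ile1; lra.
  have tx0 : 0 <= t ^+ x by exact: exprn_ge0.
  case: eqP => _ /=; last first.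
    by rewrite mul1r ler_piMl.
  case: ifP => Hx; first by rewrite mulr_ge0 // exprn_ge0.
  apply: ler_wpM2r => //; apply: ler_wiXn2l => //; first lra.
  by rewrite leqNgt Hx.
rewrite big_split /= prodr_const card_ord exprVn.
rewrite (bigD1 i) //= eqxx big1 ?mulr1 // => k Hk; by rewrite (negbTE Hk).
Qed.

End Tail.


Section Helpers.
Variables (R : realType) (n : nat).
Local Notation C := (R[i]).
Local Notation ser := (mi n -> C).

Lemma sqmodR (x : R) : sqmod (x%:C) = x ^+ 2.
Proof. by rewrite /sqmod /= expr0n addr0. Qed.

Lemma normcR (x : R) : 0 <= x -> normc (x%:C) = x.
Proof. by move=> x0; rewrite /normc /= expr0n addr0 sqrtr_sqr ger0_norm. Qed.

Lemma root_sqmod N (w : C) : (0 < N)%N -> N.-primitive_root w -> sqmod w = 1.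
Proof.
move=> N0 pw; have wN := prim_expr_order pw.
apply/eqP; rewrite -(pexpr_eq1 N0 (sqmod_ge0 w)) -sqmodX wN; apply/eqP; exact: sqmod1.
Qed.

Lemma parsR N W (w : C) (G : ser) : (0 < N)%N -> N.-primitive_root w ->
  \sum_(j : {ffun 'I_n -> 'I_N}) sqmod (Sj W w j G)
  = (N ^ n)%:R * \sum_(m : {ffun 'I_n -> 'I_N}) sqmod (Am N W (mi_of m) G).
Proof.
move=> N0 pw; apply: (@complexI R).
rewrite rmorphM rmorph_sum rmorph_nat rmorph_sum /=.
under eq_bigr do rewrite sqmod_conj.
under [in RHS]eq_bigr do rewrite sqmod_conj.
exact: pars.
Qed.

Lemma sqmod_lower (x e : C) : sqmod x - 2 * (normc x * normc e) <= sqmod (x + e).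
Proof.
have h1 := normc_ge0 x; have h2 := normc_ge0 e; have h3 := normc_ge0 (x + e).
have tri : normc x <= normc (x + e) + normc e.
  have -> : x = (x + e) + - e by ring.
  by apply: le_trans (normcD' _ _) _; rewrite normcN' addrK.
rewrite -!normc_sq.
set a := normc x in h1 tri *; set b := normc e in h2 tri *; set s := normc (x + e) in h3 tri *.
have [ab|ab] := lerP a b.
  have : a * (a - 2 * b) <= 0 by rewrite mulr_ge0_le0 //; lra.
  have := sqr_ge0 s; nra.
have hs : a - b <= s by lra.
have : (a - b) ^+ 2 <= s ^+ 2 by rewrite ler_sqr ?nnegrE //; lra.
have := sqr_ge0 b; nra.
Qed.

Lemma rho_le1 (r : R) (c : mi n) : 0 <= r <= 1 -> rho r c <= 1 :> R.
Proof.
case/andP => r0 r1; rewrite /rho; apply: prodr_ile1 => i _; apply/andP; split.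
  exact: exprn_ge0.
exact: exprn_ile1.
Qed.

Lemma rho_lower (r : R) (c : mi n) T : 0 <= r <= 1 -> inbox T c -> r ^+ (T * n) <= rho r c.
Proof.
case/andP => r0 r1 /forallP Hc.
rewrite exprM; have -> : r ^+ T ^+ n = \prod_(i < n) r ^+ T by rewrite prodr_const card_ord.
rewrite /rho; apply: ler_prod => i _.
rewrite exprn_ge0 //=; apply: ler_wiXn2l => //; exact: ltnW.
Qed.

Lemma mmod_id N (c : mi n) : inbox N c -> mmod N c = c.
Proof. move=> /forallP H; apply/ffunP => i; rewrite ffunE modn_small //. Qed.

End Helpers.


Section Key.
Variables (R : realType) (n : nat).
Local Notation C := (R[i]).
Local Notation ser := (mi n -> C).

Lemma sqmod0 : sqmod (0 : C) = 0.
Proof. by rewrite /sqmod /= expr0n addr0. Qed.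

Lemma key_tN (theta g : ser) B M T t N :
  (forall K, bsumR K (fun a => sqmod (theta a)) <= B) ->
  (forall z, polydisc z -> exists v, heval theta z v /\ sqmod v <= M) ->
  0 < t < 1 -> (T <= N)%N -> (0 < N)%N ->
  t ^+ (2 * (T * n) * 2) * bsumR T (fun a => sqmod (smul theta g a))
  <= M * bsumR T (fun a => sqmod (g a)) +
     (T ^ n)%:R * (2 * (((1 + B) * \sum_(b : {ffun 'I_n -> 'I_T}) normc (g (mi_of b))) *
       (((1 + B) * \sum_(b : {ffun 'I_n -> 'I_T}) normc (g (mi_of b))) *
        (n%:R * (t ^+ N / (1 - t) ^+ n))))).
Proof.
move=> HB Hinf /andP [t0 t1] TN N0.
set X := bsumR T (fun a => sqmod (smul theta g a)).
set Y := bsumR T (fun a => sqmod (g a)).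
set D := (1 + B) * \sum_(b : {ffun 'I_n -> 'I_T}) normc (g (mi_of b)).
set tau := n%:R * (t ^+ N / (1 - t) ^+ n).
set k := (2 * (T * n) * 2)%N.
set r := t ^+ 2.
have r0 : 0 <= r by exact: sqr_ge0.
have tt1 : t * t < 1 by nra.
have r1 : r < 1 by rewrite /r expr2.
have hr : 0 <= r <= 1 by rewrite r0 ltW.
have B0 : 0 <= B := inH2_ge0 HB.
have beta : forall a, normc (theta a) <= 1 + B.
  move=> a; have := coef_bound HB a; rewrite -normc_sq; have := normc_ge0 (theta a); nra.
have D0 : 0 <= D by rewrite /D mulr_ge0 //; [lra | apply: sumr_ge0 => b _; exact: normc_ge0].
have tau0 : 0 <= tau.
  rewrite /tau; apply: mulr_ge0; first exact: ler0n.
  apply: divr_ge0; apply: exprn_ge0; lra.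
have [w pw] := @prim_ex R N N0.
have ws := root_sqmod N0 pw.
pose z := fun (j : {ffun 'I_n -> 'I_N}) (i : 'I_n) => r%:C * w ^+ (j i).
have pz : forall j, polydisc (z j).
  move=> j i; rewrite /z sqmodM sqmodR sqmodX ws expr1n mulr1 expr2; nra.
have [v Hv] := choice (fun j => Hinf (z j) (pz j)).
pose thr := fun a => theta a * (rho r a)%:C.
pose gr := fun a => g a * (rho r a)%:C.
pose Yf := fun L => \sum_(j : {ffun 'I_n -> 'I_N}) sqmod (Sj L w j thr) * sqmod (Sj T w j gr).
pose Yinf := \sum_(j : {ffun 'I_n -> 'I_N}) sqmod (v j) * sqmod (Sj T w j gr).
have Ycvg : Yf @ \oo --> Yinf.
  rewrite /Yf /Yinf; apply: cvg_sumI => j; apply: cvgM; last exact: cvg_cst.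
  have [H1 _] := Hv j; rewrite /heval in H1.
  apply: cvg_sqmod; apply: cvgC_ext H1 => L; exact: expand_pt.
have j0 : {ffun 'I_n -> 'I_N} := [ffun => Ordinal N0].
have M0 : 0 <= M := le_trans (sqmod_ge0 _) (Hv j0).2.
have Yup : Yinf <= M * ((N ^ n)%:R * Y).
  apply: le_trans (_ : _ <= \sum_(j : {ffun 'I_n -> 'I_N}) M * sqmod (Sj T w j gr)) _.
    apply: ler_sum => j _; apply: ler_wpM2r; [exact: sqmod_ge0 | exact: (Hv j).2].
  rewrite -mulr_sumr; apply: ler_wpM2l => //.
  rewrite parsR //; apply: ler_wpM2l; first exact: ler0n.
  have EA : forall m : {ffun 'I_n -> 'I_N},
      Am N T (mi_of m) gr = if inbox T (mi_of m) then gr (mi_of m) else 0.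
    move=> m; rewrite /Am.
    under eq_bigr do rewrite (mmod_id (inbox_le TN (inbox_mi_of _))).
    exact: (sum_delta T (mi_of m) gr).
  under eq_bigr do rewrite EA.
  rewrite (@sum_supp _ _ T N (fun m => sqmod (if inbox T m then gr m else 0))) //; last first.
    by move=> d /negbTE ->; rewrite sqmod0.
  rewrite /Y /bsumR; apply: ler_sum => m _; rewrite inbox_mi_of /gr sqmodM sqmodR.
  apply: ler_piMr; first exact: sqmod_ge0.
  have := rho_le1 (mi_of m) hr; have := rho_ge0 (mi_of m) r0; rewrite expr2; nra.
have Ylow : forall L, (T <= L)%N ->
    (N ^ n)%:R * (t ^+ k * X - (T ^ n)%:R * (2 * (D * (D * tau)))) <= Yf L.
  move=> L TL.
  have EY : Yf L = (N ^ n)%:R * \sum_(m : {ffun 'I_n -> 'I_N})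
        sqmod (Am N (L + T)%N (mi_of m) (mconv L T thr gr)).
    rewrite /Yf -(@parsR R n N (L + T)%N w (mconv L T thr gr) N0 pw); apply: eq_bigr => j _; by rewrite -sqmodM Sj_mul.
  rewrite EY; apply: ler_wpM2l; first exact: ler0n.
  apply: le_trans _ (@sum_mono n R T N (fun m => sqmod (Am N (L + T)%N m (mconv L T thr gr))) TN (fun d => sqmod_ge0 _)).
  have -> : t ^+ k * X - (T ^ n)%:R * (2 * (D * (D * tau))) =
      \sum_(m : {ffun 'I_n -> 'I_T}) (t ^+ k * sqmod (smul theta g (mi_of m)) - 2 * (D * (D * tau))).
    rewrite sumrB -mulr_sumr sumr_const card_ffun !card_ord mulr_natl.
    by rewrite /X /bsumR.
  apply: ler_sum => m _ /=.
  set mm := mi_of m.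
  have hmT : inbox T mm := inbox_mi_of m.
  have hmN : inbox N mm := inbox_le TN hmT.
  have hmW : inbox (L + T)%N mm := inbox_le (leq_addl L T) hmT.
  set G := mconv L T thr gr.
  set E := \sum_(c : {ffun 'I_n -> 'I_(L + T)%N})
     (if (mmod N (mi_of c) == mm) && (mi_of c != mm) then G (mi_of c) else 0).
  have EA : Am N (L + T)%N mm G = G mm + E.
    have := sum_delta (L + T)%N mm G; rewrite hmW => <-.
    rewrite /Am /E -big_split; apply: eq_bigr => c _ /=.
    case: (mi_of c =P mm) => [->|ne].
      by rewrite mmod_id // eqxx /= addr0.
    by rewrite /= andbT; case: ifP => _; rewrite ?add0r ?addr0.
  have GC : forall c, G c = mconv L T theta g c * (rho r c)%:C.
    move=> c; rewrite /G /thr /gr; exact: mconv_rho.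
  have nG : forall c, normc (G c) <= D * rho r c.
    move=> c; rewrite GC normcM' normcR ?rho_ge0 //; apply: ler_wpM2r; first exact: rho_ge0.
    exact: mconv_bound.
  have nE : normc E <= D * tau.
    apply: le_trans (normc_sum _ _) _.
    apply: le_trans (_ : _ <= \sum_(c : {ffun 'I_n -> 'I_(L + T)%N})
        D * (if inbox N (mi_of c) then 0 else rho r (mi_of c))) _.
      apply: ler_sum => c _; case: ifP => H; last first.
        by rewrite normc0; case: ifP => _; rewrite ?mulr0 // mulr_ge0 // rho_ge0.
      case/andP: H => /eqP H1 H2.
      have -> : inbox N (mi_of c) = false.
        apply/negP => Hc; move: H2; by rewrite -H1 mmod_id // eqxx.
      exact: nG.
    rewrite -mulr_sumr; apply: ler_wpM2l => //; apply: tail; lra.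
  have sG : t ^+ k * sqmod (smul theta g mm) <= sqmod (G mm).
    rewrite GC sqmodM sqmodR (mconv_smul _ _ TL hmT) [leRHS]mulrC; apply: ler_wpM2r; first exact: sqmod_ge0.
    have hl := rho_lower hr hmT.
    have hl2 : 0 <= r ^+ (T * n) by exact: exprn_ge0.
    rewrite /k (exprM t (2 * (T * n)) 2) (exprM t 2 (T * n)) -/r.
    by rewrite ler_sqr ?nnegrE // rho_ge0.
  have hG : normc (G mm) <= D.
    apply: le_trans (nG mm) _; rewrite -[leRHS]mulr1; apply: ler_wpM2l => //; exact: rho_le1.
  rewrite EA; apply: le_trans (sqmod_lower _ _).
  have := ler_pM (normc_ge0 _) (normc_ge0 _) hG nE.
  lra.
have h := lim_ge Ycvg Ylow.
have Npos : 0 < (N ^ n)%:R :> R by rewrite ltr0n expn_gt0 N0.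
have h2 : (N ^ n)%:R * (t ^+ k * X - (T ^ n)%:R * (2 * (D * (D * tau)))) <= (N ^ n)%:R * (M * Y).
  apply: le_trans h _; by rewrite mulrCA.
rewrite ler_pM2l // in h2.
lra.
Qed.

End Key.


Section Final.
Variables (R : realType) (n : nat).
Local Notation C := (R[i]).
Local Notation ser := (mi n -> C).

Lemma key (theta g : ser) B M T :
  (forall K, bsumR K (fun a => sqmod (theta a)) <= B) ->
  (forall z, polydisc z -> exists v, heval theta z v /\ sqmod v <= M) ->
  bsumR T (fun a => sqmod (smul theta g a)) <= M * bsumR T (fun a => sqmod (g a)).
Proof.
move=> HB Hinf.
apply: (@lim_t _ _ _ (2 * (T * n) * 2)); first by apply: bsumR_ge0 => a; exact: sqmod_ge0.
move=> t /andP [t0 t1].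
set D := (1 + B) * \sum_(b : {ffun 'I_n -> 'I_T}) normc (g (mi_of b)).
have B0 := inH2_ge0 HB.
have D0 : 0 <= D by rewrite /D mulr_ge0 //; [lra | apply: sumr_ge0 => b _; exact: normc_ge0].
have A0 : 0 <= (T ^ n)%:R * (2 * (D * (D * (n%:R / (1 - t) ^+ n)))).
  apply: mulr_ge0; first exact: ler0n.
  apply: mulr_ge0; first lra.
  apply: mulr_ge0 => //; apply: mulr_ge0 => //; apply: mulr_ge0; first exact: ler0n.
  rewrite invr_ge0; apply: exprn_ge0; lra.
apply: (@lim_N _ _ _ _ t T.+1 A0); first by rewrite (ltW t0) t1.
move=> N HN.
have TN : (T <= N)%N by exact: ltnW.
have N0 : (0 < N)%N by exact: leq_trans HN.
have tt : 0 < t < 1 by rewrite t0 t1.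
have := key_tN g HB Hinf tt TN N0.
rewrite -/D.
suff -> : (T ^ n)%:R * (2 * (D * (D * (n%:R * (t ^+ N / (1 - t) ^+ n))))) =
  (T ^ n)%:R * (2 * (D * (D * (n%:R / (1 - t) ^+ n)))) * t ^+ N by [].
ring.
Qed.

Lemma smulB (phi g1 g2 : ser) c : smul phi (fun b => g1 b - g2 b) c = smul phi g1 c - smul phi g2 c.
Proof. by rewrite /smul -sumrB; apply: eq_bigr => a _; rewrite mulrBr. Qed.

Lemma mle_msub0 (b c : mi n) : mle b c && (msub c b == [ffun => 0%N]) = (b == c).
Proof.
apply/idP/idP => [/andP [/forallP H1 /eqP /ffunP H2]| /eqP ->].
  apply/eqP/ffunP => i; have := H1 i; have := H2 i; rewrite !ffunE => h1 h2.
  by apply/eqP; rewrite eqn_leq h2 /= -subn_eq0 h1.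
apply/andP; split; first by apply/forallP => i.
by apply/eqP/ffunP => i; rewrite !ffunE subnn.
Qed.

Lemma trunc_decomp (phi f : ser) k c :
  smul phi (trunc k f) c - trunc k f c =
  \sum_(b : {ffun 'I_n -> 'I_k}) f (mi_of b) * sh (mi_of b) (fun a => phi a - hone R a) c.
Proof.
set L := maxn k (mbound c).+1.
rewrite (@smul_sh R n phi (trunc k f) c L (inbox_le (leq_maxr _ _) (inbox_mbound c))).
rewrite (@sum_supp n _ k L (fun d => trunc k f d * sh d phi c)) ?leq_maxl //; last first.
  by move=> d /negbTE H; rewrite /trunc H mul0r.
have Etr : trunc k f c = \sum_(b : {ffun 'I_n -> 'I_k}) f (mi_of b) * sh (mi_of b) (@hone R n) c.
  have := sum_delta k c f; rewrite /trunc /= => <-.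
  apply: eq_bigr => b _; rewrite /sh. rewrite /hone. rewrite -(mle_msub0 (mi_of b) c).
  by case: (mle (mi_of b) c) => /=; [case: ifP => _; rewrite ?mulr1 ?mulr0 | rewrite mulr0].
rewrite Etr -sumrB; apply: eq_bigr => b _; rewrite /trunc inbox_mi_of -mulrBr; congr (_ * _).
by rewrite /sh; case: ifP => _ //; rewrite subrr.
Qed.

End Final.

Theorem proposition6p4 (R : realType) (n : nat) (hn : (1 <= n)%N)
  (Q : set (mi n -> R[i])) (hQ : quotient_module Q)
  (theta : mi n -> R[i]) (htheta : is_proj Q (@hone R n) theta)
  (hinf : inHinf theta) :
  forall f, Q f -> inH2 (smul theta f) /\ is_proj Q (smul theta f) f.
Proof.
move=> f Qf.
have [[HQ1 HQ2 HQ3 HQ4 HQ5] HQT] := hQ.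
have [Qth Hth] := htheta.
have thH2 : inH2 theta := HQ1 _ Qth.
have [B HB] := thH2.
have [M Hinf] := hinf.
have fH2 := HQ1 _ Qf; have [Bf HBf] := fH2.
have M0 : 0 <= M.
  have pz : polydisc (fun _ : 'I_n => (0 : R[i])) by move=> i; rewrite sqmod0; lra.
  have [v [_ Hv]] := Hinf _ pz; exact: le_trans (sqmod_ge0 _) Hv.
split.
  exists (M * Bf) => N; apply: le_trans (key f N HB Hinf) _; exact: ler_wpM2l.
split; first done.
move=> h Qh.
pose gk := fun K => fun a => smul theta (trunc K f) a - trunc K f a.
apply: (@inner_lim R n _ gk h (HQ1 _ Qh)).
- move=> e e0.
  have e' : 0 < e / (2 * M + 2) by rewrite divr_gt0 //; lra.
  have [K HK] := trunc_cvg fH2 e'.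
  exists K => k Hk N.
  set d := fun b => trunc k f b - f b.
  have E : forall a, gk k a - (smul theta f a - f a) = smul theta d a - d a.
    by move=> a; rewrite /gk /d smulB; ring.
  rewrite /bsumR /=; under eq_bigr do rewrite E.
  apply: le_trans (_ : _ <= bsumR N (fun a => 2 * sqmod (smul theta d a) + 2 * sqmod (d a))) _.
    rewrite /bsumR; apply: ler_sum => a _; rewrite -(sqmodN (d _)); exact: sqmodD.
  rewrite /bsumR big_split /= -!mulr_sumr.
  have h1 := key d N HB Hinf; have h2 := HK k Hk N.
  rewrite /bsumR in h1 h2.
  set X1 := \sum_(i : {ffun 'I_n -> 'I_N}) sqmod (smul theta d (mi_of i)) in h1 *.
  set X2 := \sum_(i : {ffun 'I_n -> 'I_N}) sqmod (d (mi_of i)) in h1 h2 *.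
  have h3 : M * X2 <= M * (e / (2 * M + 2)) by exact: ler_wpM2l.
  have h4 : (2 * M + 2) * (e / (2 * M + 2)) = e by field; lra.
  nra.
- move=> k.
  pose s0 := fun a => theta a - hone R a.
  have Ss0 : Sperp Q s0.
    have H1 : Sperp Q (fun a => hone R a - theta a).
      split; first exact: inH2_sub (@inH2_hone R n) thH2.
      exact: Hth.
    apply: Sperp_ext (Sperp_scale (-1) H1) => a; rewrite /s0; ring.
  have Sg : Sperp Q (gk k).
    have HS := @Sperp_sum R n Q _ (fun b : {ffun 'I_n -> 'I_k} => (fun a => f (mi_of b) * sh (mi_of b) s0 a))
      (fun b => Sperp_scale (f (mi_of b)) (Sperp_sh (mi_of b) hQ Ss0)).
    by apply: Sperp_ext HS => a; rewrite /gk trunc_decomp.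
  exact: Sg.2.
Qed.
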